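(* For $\mathbf v\in\mathbb{R}^\infty$, let $g_{-\mathbf v}(x)$ be the generating function of $\mathbb{F}^{\rm F}\mathbf v$ and $g_{\mathbf v}(x)$ the generating function of $\mathbb{L}^{\rm F}\mathbf v$, where $\mathbb{F}^{\rm F}=\left(\frac{x}{1-x},\frac{x^2}{1-x}\right)$ and $\mathbb{L}^{\rm F}=\left(\frac{2-x}{1-x},\frac{x^2}{1-x}\right)$. Let $C(x)=\frac{1-\sqrt{1-4x}}{2x}$ and $M(x)=\frac{1-x-\sqrt{(1-x)^2-4x^2}}{2x^2}$. Then, as formal power series: (a) $g_{\mathbf v}(xC(x))=\left(C(x)-\frac{2}{x}\right)g_{-\mathbf v}(1-C(x))$; (b) $g_{\mathbf v}(1-C(x))=\left(2xC(x)^2+xC(x)-4C(x)+\frac{2-x}{x}\right)g_{-\mathbf v}(xC(x))$; (c) $g_{\mathbf v}(xC(x))=\left(\frac{x-2}{x}+\frac{x}{1-x}M\!\left(\frac{x}{1-x}\right)\right)g_{-\mathbf v}\!\left(-\frac{x}{1-x}M\!\left(\frac{x}{1-x}\right)\right)$; (d) $g_{\mathbf v}\!\left(-\frac{x}{1-x}M\!\left(\frac{x}{1-x}\right)\right)=\left((3x-4)C(x)+\frac{2x^2C(x)}{1-x}M\!\left(\frac{x}{1-x}\right)+\frac{2-x}{x}\right)g_{-\mathbf v}(xC(x))$.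
   Context: $\mathbb{R}^\infty$ is the space of real column vectors $[v_0,v_1,\ldots]^T$, identified with generating functions $\sum_n v_nx^n$. For formal power series $g(x)$ and $f(x)$ with $f(0)=0$, $(g(x),f(x))$ denotes the infinite lower triangular matrix whose $j$-th column has generating function $g(x)f(x)^j$; it maps a vector with generating function $U(x)$ to the vector with generating function $g(x)U(f(x))$. Note $g_{-\mathbf v}$ has zero constant term, so the products with the factor $1/x$ above are formal power series. *)

(* Defs.v *)
From HB Require Import structures.
From mathcomp Require Import all_boot all_order all_algebra.
From mathcomp Require Import reals.
Set Implicit Arguments. Unset Strict Implicit. Unset Printing Implicit Defensive.
Import Order.TTheory GRing.Theory Num.Theory.
Local Open Scope ring_scope.

Section FPS.
Variable R : rcfType.

Definition fps := nat -> R.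

Definition fcst (c : R) : fps := fun n => if n == 0%N then c else 0.
Definition fX : fps := fun n => if n == 1%N then 1 else 0.
Definition fadd (f g : fps) : fps := fun n => f n + g n.
Definition fscale (c : R) (f : fps) : fps := fun n => c * f n.
Definition fsub (f g : fps) : fps := fun n => f n - g n.
Definition fopp (f : fps) : fps := fun n => - f n.
Definition fmul (f g : fps) : fps :=
  fun n => \sum_(i < n.+1) f i * g (n - i)%N.
Definition fpow (f : fps) (k : nat) : fps := iter k (fmul f) (fcst 1).
(* composition g(h(x)); meaningful when h 0 = 0 *)
Definition fcomp (g h : fps) : fps :=
  fun n => \sum_(k < n.+1) g k * fpow h k n.
(* division by x: (f(x) - f(0)) / x, i.e. f / x when f 0 = 0 *)
Definition divX (f : fps) : fps := fun n => f n.+1.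

(* multiplicative inverse 1/f (for f 0 <> 0): coefficients b_0..b_n *)
Fixpoint inv_seq (f : fps) (n : nat) : seq R :=
  match n with
  | 0 => [:: (f 0%N)^-1]
  | m.+1 => let s := inv_seq f m in
      rcons s (- (f 0%N)^-1 * \sum_(i < m.+1) f (m.+1 - i)%N * nth 0 s i)
  end.
Definition finv (f : fps) : fps := fun n => nth 0 (inv_seq f n) n.
Definition fdiv (f g : fps) : fps := fmul f (finv g).

(* principal square root (constant term Num.sqrt (f 0)), for f 0 > 0 *)
Fixpoint sqrt_seq (f : fps) (n : nat) : seq R :=
  match n with
  | 0 => [:: Num.sqrt (f 0%N)]
  | m.+1 => let s := sqrt_seq f m in
      rcons s ((f m.+1 - \sum_(1 <= k < m.+1) nth 0 s k * nth 0 s (m.+1 - k)%N)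
               / (2 * Num.sqrt (f 0%N)))
  end.
Definition fsqrt (f : fps) : fps := fun n => nth 0 (sqrt_seq f n) n.

(* the Riordan array (g, f) acting on V : V(x) |-> g(x) V(f(x)) *)
Definition riordan_apply (g f V : fps) : fps := fmul g (fcomp V f).

Definition one_minus_x : fps := fsub (fcst 1) fX.

Definition FF_g : fps := fdiv fX one_minus_x.
Definition FF_f : fps := fdiv (fmul fX fX) one_minus_x.
Definition LF_g : fps := fdiv (fsub (fcst 2) fX) one_minus_x.
Definition LF_f : fps := fdiv (fmul fX fX) one_minus_x.

(* g_{-v} = gf of F^F v ;  g_v = gf of L^F v *)
Definition g_minus (v : fps) : fps := riordan_apply FF_g FF_f v.
Definition g_plus (v : fps) : fps := riordan_apply LF_g LF_f v.

(* C(x) = (1 - sqrt(1-4x)) / (2x) *)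
Definition Cat : fps :=
  divX (fscale (1/2) (fsub (fcst 1) (fsqrt (fsub (fcst 1) (fscale 4 fX))))).
(* M(x) = (1 - x - sqrt((1-x)^2 - 4x^2)) / (2x^2) *)
Definition Motz : fps :=
  divX (divX (fscale (1/2)
    (fsub one_minus_x
       (fsqrt (fsub (fmul one_minus_x one_minus_x)
                    (fscale 4 (fmul fX fX))))))).

(* (A + B/x) * G, where B*G has zero constant term (so the result is an fps) *)
Definition laurent_mul (A B G : fps) : fps := fadd (fmul A G) (divX (fmul B G)).

End FPS.

(* Main.v *)
Require Import Defs.
From HB Require Import structures.
From mathcomp Require Import all_boot all_order all_algebra.
From mathcomp Require Import reals.
From Stdlib Require Import FunctionalExtensionality Ring.
Set Implicit Arguments. Unset Strict Implicit. Unset Printing Implicit Defensive.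
Import Order.TTheory GRing.Theory Num.Theory.
Local Open Scope ring_scope.

Section Infra.
Variable R : rcfType.
Local Notation fps := (fps R).
Local Notation finv := (@Defs.finv R).

Lemma fps_ext (f g : fps) : (forall n, f n = g n) -> f = g.
Proof. move=> H; exact: functional_extensionality. Qed.

Definition agree (N : nat) (p : {poly R}) (f : fps) := forall i, (i < N)%N -> p`_i = f i.
Definition tr (N : nat) (f : fps) : {poly R} := \poly_(i < N) f i.

Lemma agree_tr N f : agree N (tr N f) f.
Proof. by move=> i Hi; rewrite coef_poly Hi. Qed.

Lemma agree_cst N c : agree N c%:P (fcst c).
Proof. by move=> i _; rewrite coefC /fcst. Qed.

Lemma agree_X N : agree N 'X (fX R).
Proof. by move=> i _; rewrite coefX /fX; case: (i == 1%N). Qed.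

Lemma agree_add N p q f g : agree N p f -> agree N q g -> agree N (p + q) (fadd f g).
Proof. by move=> Hf Hg i Hi; rewrite coefD Hf // Hg. Qed.

Lemma agree_opp N p f : agree N p f -> agree N (- p) (fopp f).
Proof. by move=> Hf i Hi; rewrite coefN Hf. Qed.

Lemma agree_sub N p q f g : agree N p f -> agree N q g -> agree N (p - q) (fsub f g).
Proof. by move=> Hf Hg i Hi; rewrite coefB Hf // Hg. Qed.

Lemma agree_mul N p q f g : agree N p f -> agree N q g -> agree N (p * q) (fmul f g).
Proof.
move=> Hf Hg i Hi; rewrite coefM /fmul; apply: eq_bigr => j _.
have Hj : (j < N)%N by apply: leq_ltn_trans Hi; rewrite -ltnS.
have Hij : (i - j < N)%N by apply: leq_ltn_trans Hi; rewrite leq_subr.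
by rewrite Hf // Hg.
Qed.

Lemma agree_pow N q h k : agree N q h -> agree N (q ^+ k) (fpow h k).
Proof.
move=> Hh; elim: k => [|k IH]; first by rewrite expr0; exact: agree_cst.
by rewrite exprS /fpow iterS; apply: agree_mul.
Qed.

Lemma agree_uniq N p f g n : agree N p f -> agree N p g -> (n < N)%N -> f n = g n.
Proof. by move=> Hf Hg Hn; rewrite -Hf // Hg. Qed.

Lemma pow_coef_low (q : {poly R}) k n : q`_0 = 0 -> (n < k)%N -> (q ^+ k)`_n = 0.
Proof.
move=> q0; elim: k n => [|k IH] n //= Hn.
rewrite exprS coefM big1 // => j _.
case: j => [[|j'] Hj] /=; first by rewrite q0 mul0r.
rewrite IH ?mulr0 //.
case: n Hn Hj => [|n] Hn Hj; first by rewrite sub0n.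
by rewrite subSS; apply: leq_ltn_trans (leq_subr _ _) _.
Qed.

Lemma sum_ext (F : nat -> R) a b :
  (forall i, (a <= i)%N -> F i = 0) -> (a <= b)%N ->
  \sum_(i < a) F i = \sum_(i < b) F i.
Proof.
move=> HF Hab; rewrite (big_ord_widen _ _ Hab) big_mkcond; apply: eq_bigr => i _.
by case: ifP => // /negbT; rewrite -leqNgt => /HF ->.
Qed.

Lemma agree_comp N p q g h : agree N p g -> agree N q h -> q`_0 = 0 ->
  agree N (p \Po q) (fcomp g h).
Proof.
move=> Hg Hh q0 n Hn; rewrite coef_comp_poly /fcomp.
have HF : forall i, (n.+1 <= i)%N -> p`_i * (q ^+ i)`_n = 0.
  by move=> i Hi; rewrite pow_coef_low ?mulr0.
rewrite (@sum_ext (fun i => p`_i * (q ^+ i)`_n) (size p) (size p + n.+1)); last first.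
- exact: leq_addr.
- by move=> i Hi; rewrite nth_default ?mul0r.
rewrite -(@sum_ext (fun i => p`_i * (q ^+ i)`_n) n.+1) ?leq_addl //.
apply: eq_bigr => i _.
have Hi : (i < N)%N by apply: leq_trans Hn; exact: ltn_ord.
by rewrite Hg // (agree_pow i Hh).
Qed.


Local Notation tf n f := (tr n.+1 f).

Lemma fmulC (f g : fps) : fmul f g = fmul g f.
Proof.
apply: fps_ext => n.
apply: (@agree_uniq n.+1 (tf n f * tf n g)) => //; first by apply: agree_mul; apply: agree_tr.
by rewrite mulrC; apply: agree_mul; apply: agree_tr.
Qed.

Lemma fmulA (f g h : fps) : fmul f (fmul g h) = fmul (fmul f g) h.
Proof.
apply: fps_ext => n.
apply: (@agree_uniq n.+1 (tf n f * (tf n g * tf n h))) => //.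
  by apply: agree_mul; [|apply: agree_mul]; apply: agree_tr.
by rewrite mulrA; apply: agree_mul; [apply: agree_mul|]; apply: agree_tr.
Qed.

Lemma fmul1 (f : fps) : fmul (fcst 1) f = f.
Proof.
apply: fps_ext => n.
apply: (@agree_uniq n.+1 (1%:P * tf n f)) => //.
  by apply: agree_mul; [apply: agree_cst|apply: agree_tr].
by rewrite mul1r; apply: agree_tr.
Qed.

Lemma fmulDl (f g h : fps) : fmul (fadd f g) h = fadd (fmul f h) (fmul g h).
Proof.
apply: fps_ext => n.
apply: (@agree_uniq n.+1 ((tf n f + tf n g) * tf n h)) => //.
  by apply: agree_mul; [apply: agree_add|]; apply: agree_tr.
by rewrite mulrDl; apply: agree_add; apply: agree_mul; apply: agree_tr.
Qed.

Lemma fps_rt : ring_theory (fcst 0) (fcst 1) (@fadd R) (@fmul R) (@fsub R) (@fopp R) (@eq fps).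
Proof.
constructor.
- by move=> f; apply: fps_ext => n; rewrite /fadd /fcst; case: (n == 0%N); rewrite add0r.
- by move=> f g; apply: fps_ext => n; rewrite /fadd addrC.
- by move=> f g h; apply: fps_ext => n; rewrite /fadd addrA.
- exact: fmul1.
- exact: fmulC.
- exact: fmulA.
- exact: fmulDl.
- by [].
- by move=> f; apply: fps_ext => n; rewrite /fadd /fopp /fcst subrr; case: (n == 0%N).
Qed.

Add Ring fpsRing : fps_rt.

Lemma test_ring (a b c : fps) : fmul (fadd a b) (fsub a b) = fsub (fmul a a) (fmul b b).
Proof. ring. Qed.

Lemma test_ring2 (x c : fps) : fmul x (fmul c c) = fsub c (fcst 1) ->
  fmul (fsub (fcst 1) (fmul x c)) c = fcst 1.
Proof. move=> E. ring [E]. Qed.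

Lemma fmul0E (f g : fps) : fmul f g 0%N = f 0%N * g 0%N.
Proof. by rewrite /fmul big_ord1. Qed.

Lemma fscaleE c (f : fps) : fscale c f = fmul (fcst c) f.
Proof.
apply: fps_ext => n.
apply: (@agree_uniq n.+1 (c%:P * tf n f)) => //; last by apply: agree_mul; [apply: agree_cst|apply: agree_tr].
by move=> i Hi; rewrite coefCM coef_poly Hi.
Qed.

Lemma fcstD a b : fcst (a + b) = fadd (fcst a) (fcst b) :> fps.
Proof. by apply: fps_ext => n; rewrite /fadd /fcst; case: (n == 0%N); rewrite ?addr0. Qed.

Lemma fcstN a : fcst (- a) = fopp (fcst a) :> fps.
Proof. by apply: fps_ext => n; rewrite /fopp /fcst; case: (n == 0%N); rewrite ?oppr0. Qed.

Lemma fcstM a b : fcst (a * b) = fmul (fcst a) (fcst b) :> fps.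
Proof. by rewrite -fscaleE; apply: fps_ext => n; rewrite /fscale /fcst; case: (n == 0%N); rewrite ?mulr0. Qed.

Lemma fXmulE (f : fps) n : fmul (fX R) f n = if n is m.+1 then f m else 0.
Proof.
rewrite -(agree_mul (@agree_X n.+1) (@agree_tr n.+1 f)) // coefXM.
by case: n => [|n] //=; rewrite coef_poly ltnW.
Qed.

Lemma divX_Xmul (f : fps) : divX (fmul (fX R) f) = f.
Proof. by apply: fps_ext => n; rewrite /divX fXmulE. Qed.

Lemma Xmul_divX (f : fps) : f 0%N = 0 -> fmul (fX R) (divX f) = f.
Proof. by move=> f0; apply: fps_ext => -[|n]; rewrite fXmulE. Qed.

Lemma fcomp0E (g h : fps) : fcomp g h 0%N = g 0%N.
Proof. by rewrite /fcomp big_ord1 /fpow /= /fcst /= mulr1. Qed.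

Lemma tr0 n (h : fps) : h 0%N = 0 -> (tf n h)`_0 = 0.
Proof. by move=> h0; rewrite coef_poly. Qed.

Lemma agree_fcomp n (g h : fps) : h 0%N = 0 -> agree n.+1 (tf n g \Po tf n h) (fcomp g h).
Proof. by move=> h0; apply: agree_comp; [apply: agree_tr|apply: agree_tr|apply: tr0]. Qed.

Lemma fcompD (f g h : fps) : h 0%N = 0 -> fcomp (fadd f g) h = fadd (fcomp f h) (fcomp g h).
Proof.
move=> h0; apply: fps_ext => n.
apply: (@agree_uniq n.+1 ((tf n f + tf n g) \Po tf n h)) => //.
  by apply: agree_comp; [apply: agree_add; apply: agree_tr|apply: agree_tr|apply: tr0].
by rewrite comp_polyD; apply: agree_add; apply: agree_fcomp.
Qed.

Lemma fcompN (f h : fps) : h 0%N = 0 -> fcomp (fopp f) h = fopp (fcomp f h).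
Proof.
move=> h0; apply: fps_ext => n.
apply: (@agree_uniq n.+1 ((- tf n f) \Po tf n h)) => //.
  by apply: agree_comp; [apply: agree_opp; apply: agree_tr|apply: agree_tr|apply: tr0].
have -> : (- tf n f) \Po tf n h = - (tf n f \Po tf n h) by rewrite -[in LHS](sub0r (tf n f)) comp_polyB comp_poly0 sub0r.
by apply: agree_opp; apply: agree_fcomp.
Qed.

Lemma fcompB (f g h : fps) : h 0%N = 0 -> fcomp (fsub f g) h = fsub (fcomp f h) (fcomp g h).
Proof. by move=> h0; rewrite /fsub -/(fadd f (fopp g)) fcompD // fcompN. Qed.

Lemma fcompM (f g h : fps) : h 0%N = 0 -> fcomp (fmul f g) h = fmul (fcomp f h) (fcomp g h).
Proof.
move=> h0; apply: fps_ext => n.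
apply: (@agree_uniq n.+1 ((tf n f * tf n g) \Po tf n h)) => //.
  by apply: agree_comp; [apply: agree_mul; apply: agree_tr|apply: agree_tr|apply: tr0].
by rewrite comp_polyM; apply: agree_mul; apply: agree_fcomp.
Qed.

Lemma fcompC c (h : fps) : h 0%N = 0 -> fcomp (fcst c) h = fcst c.
Proof.
move=> h0; apply: fps_ext => n.
apply: (@agree_uniq n.+1 (c%:P \Po tf n h)) => //.
  by apply: agree_comp; [apply: agree_cst|apply: agree_tr|apply: tr0].
by rewrite comp_polyC; apply: agree_cst.
Qed.

Lemma fcompX (h : fps) : h 0%N = 0 -> fcomp (fX R) h = h.
Proof.
move=> h0; apply: fps_ext => n.
apply: (@agree_uniq n.+1 ('X \Po tf n h)) => //.
  by apply: agree_comp; [apply: agree_X|apply: agree_tr|apply: tr0].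
by rewrite comp_polyX; apply: agree_tr.
Qed.

Lemma fcompA (f g h : fps) : g 0%N = 0 -> h 0%N = 0 ->
  fcomp (fcomp f g) h = fcomp f (fcomp g h).
Proof.
move=> g0 h0; apply: fps_ext => n.
apply: (@agree_uniq n.+1 ((tf n f \Po tf n g) \Po tf n h)) => //.
  by apply: agree_comp; [apply: agree_fcomp|apply: agree_tr|apply: tr0].
rewrite -comp_polyA; apply: agree_comp; [apply: agree_tr|apply: agree_fcomp => //|].
by rewrite (@agree_fcomp n g h h0) // fcomp0E.
Qed.

Lemma size_inv_seq (f : fps) n : size (inv_seq f n) = n.+1.
Proof. by elim: n => [|n IH] //=; rewrite size_rcons IH. Qed.

Lemma inv_seq_nth (f : fps) n i : (i <= n)%N -> nth 0 (inv_seq f n) i = finv f i.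
Proof.
elim: n => [|n IH] Hi; first by move: Hi; rewrite leqn0 => /eqP ->.
rewrite leq_eqVlt in Hi; case/orP: Hi => [/eqP ->|Hi] //.
by rewrite /= nth_rcons size_inv_seq Hi IH.
Qed.

Lemma finvS (f : fps) m :
  finv f m.+1 = - (f 0%N)^-1 * \sum_(i < m.+1) f (m.+1 - i)%N * finv f i.
Proof.
rewrite {1}/finv /= nth_rcons size_inv_seq ltnn eqxx; congr (_ * _).
by apply: eq_bigr => i _; rewrite inv_seq_nth // -ltnS.
Qed.

Lemma fmul_finv (f : fps) : f 0%N != 0 -> fmul f (finv f) = fcst 1.
Proof.
move=> f0; rewrite fmulC; apply: fps_ext => -[|m].
  by rewrite fmul0E /finv /= mulVf.
rewrite /fmul big_ord_recr /= subnn finvS /fcst /=.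
rewrite mulrAC mulNr mulVf // mulN1r.
by apply/eqP; rewrite subr_eq0; apply/eqP; apply: eq_bigr => i _; rewrite mulrC.
Qed.

Lemma size_sqrt_seq (f : fps) n : size (sqrt_seq f n) = n.+1.
Proof. by elim: n => [|n IH] //=; rewrite size_rcons IH. Qed.

Lemma sqrt_seq_nth (f : fps) n i : (i <= n)%N -> nth 0 (sqrt_seq f n) i = fsqrt f i.
Proof.
elim: n => [|n IH] Hi; first by move: Hi; rewrite leqn0 => /eqP ->.
rewrite leq_eqVlt in Hi; case/orP: Hi => [/eqP ->|Hi] //.
by rewrite /= nth_rcons size_sqrt_seq Hi IH.
Qed.

Lemma fsqrtS (f : fps) m :
  fsqrt f m.+1 = (f m.+1 - \sum_(1 <= k < m.+1) fsqrt f k * fsqrt f (m.+1 - k)%N)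
                  / (2 * Num.sqrt (f 0%N)).
Proof.
have E : \sum_(1 <= k < m.+1) nth 0 (sqrt_seq f m) k * nth 0 (sqrt_seq f m) (m.+1 - k)%N
   = \sum_(1 <= k < m.+1) fsqrt f k * fsqrt f (m.+1 - k)%N.
  apply: eq_big_nat => i /andP [Hi1 Hi2].
  rewrite !sqrt_seq_nth //. all: try (by rewrite -ltnS).
  by case: i Hi1 Hi2 => // i _ _; rewrite subSS leq_subr.
by rewrite {1}/fsqrt /= nth_rcons size_sqrt_seq ltnn eqxx E.
Qed.

Lemma fsqrt_sq (f : fps) : 0 < f 0%N -> fmul (fsqrt f) (fsqrt f) = f.
Proof.
move=> f0.
have a0 : Num.sqrt (f 0%N) != 0 by rewrite gt_eqF // sqrtr_gt0.
apply: fps_ext => -[|m].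
  by rewrite fmul0E /fsqrt /= -expr2 sqr_sqrtr // ltW.
rewrite /fmul big_ord_recl /= big_ord_recr /= subnn subn0.
rewrite (fsqrtS f m) big_add1 /= big_mkord.
have -> : fsqrt f 0%N = Num.sqrt (f 0%N) by [].
have -> : \sum_(i < m) fsqrt f (bump 0 i) * fsqrt f (m.+1 - bump 0 i)%N
  = \sum_(i < m) fsqrt f i.+1 * fsqrt f (m.+1 - i.+1)%N.
  by apply: eq_bigr => i _; rewrite /bump add1n.
set S := \sum_(i < m) _.
set a := Num.sqrt _.
set X := (_ - S) / _.
rewrite [X * a]mulrC addrCA -mulr2n -mulr_natl mulrA /X mulrC divfK.
  by rewrite addrC subrK.
by rewrite mulf_neq0 // pnatr_eq0.
Qed.

Lemma fcst2 : fcst 2 = fadd (fcst 1) (fcst 1) :> fps.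
Proof. by apply: fps_ext => n; rewrite /fadd /fcst; case: (n == 0%N); rewrite ?addr0. Qed.

Lemma fcst3 : fcst 3 = fadd (fcst 1) (fadd (fcst 1) (fcst 1)) :> fps.
Proof. by apply: fps_ext => n; rewrite /fadd /fcst; case: (n == 0%N); rewrite ?addr0. Qed.

Lemma fcst4 : fcst 4 = fadd (fcst 1) (fadd (fcst 1) (fadd (fcst 1) (fcst 1))) :> fps.
Proof. by apply: fps_ext => n; rewrite /fadd /fcst; case: (n == 0%N); rewrite ?addr0. Qed.

Lemma fcst0E : fcst 0 = (fun _ => 0) :> fps.
Proof. by apply: fps_ext => n; rewrite /fcst; case: (n == 0%N). Qed.

Lemma cancel_unit (q a : fps) : q 0%N != 0 -> fmul q a = fcst 0 -> a = fcst 0.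
Proof.
move=> q0 H.
have Hi := fmul_finv q0.
transitivity (fmul (fmul q (finv q)) a); first by rewrite Hi; ring.
transitivity (fmul (finv q) (fmul q a)); first by ring.
by rewrite H; ring.
Qed.

Lemma cancel_X (a : fps) : fmul (fX R) a = fcst 0 -> a = fcst 0.
Proof.
move=> H; rewrite -(divX_Xmul a) H; apply: fps_ext => n.
by rewrite /divX fcst0E.
Qed.

Lemma inv_uniq (a b q : fps) : fmul a q = fcst 1 -> fmul b q = fcst 1 -> a = b.
Proof.
move=> Ha Hb.
transitivity (fmul a (fmul b q)); first by rewrite Hb; ring.
transitivity (fmul b (fmul a q)); first by ring.
by rewrite Ha; ring.
Qed.

Lemma sub_eq0 (a b : fps) : fsub a b = fcst 0 -> a = b.
Proof.
move=> H; transitivity (fadd (fsub a b) b); first by ring.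
by rewrite H; ring.
Qed.

Lemma half2 (f : fps) : fmul (fcst 2) (fscale (1/2) f) = f.
Proof.
rewrite fscaleE fmulA -fcstM mul1r mulfV ?fmul1 //.
by rewrite pnatr_eq0.
Qed.

Lemma coef_at (f g : fps) : f = g -> f 0%N = g 0%N.
Proof. by move=> ->. Qed.

Local Notation fx := (fX R).
Local Notation fC := (Cat R).

Lemma Cat_rel : fmul fx (fmul fC fC) = fsub fC (fcst 1).
Proof.
set T : fps := fsub (fcst 1) (fscale 4 fx).
have T0 : T 0%N = 1 by rewrite /T /fsub /fscale /fcst /fX /= mulr0 subr0.
set S := fsqrt T.
have SS : fmul S S = T by apply: fsqrt_sq; rewrite T0 ltr01.
have S0 : S 0%N = 1 by rewrite /S /fsqrt /= T0 sqrtr1.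
set D := fscale (1/2) (fsub (fcst 1) S).
have D0 : D 0%N = 0 by rewrite /D /fscale /fsub /fcst /= S0 subrr mulr0.
have XC : fmul fx fC = D by rewrite /Cat -/S -/D Xmul_divX.
have HS : S = fsub (fcst 1) (fmul (fcst 2) (fmul fx fC)).
  rewrite XC /D half2; ring.
have H : fmul (fcst 4) (fmul fx (fsub (fmul fx (fmul fC fC)) (fsub fC (fcst 1)))) = fcst 0.
  transitivity (fsub (fmul S S) T); last by rewrite SS; ring.
  rewrite HS /T fscaleE fcst2 fcst4; ring.
apply: sub_eq0; apply: cancel_X; apply: (cancel_unit _ H).
by rewrite /fcst /= pnatr_eq0.
Qed.

Lemma Cat0 : fC 0%N = 1.
Proof.
have := coef_at Cat_rel; rewrite fmul0E /fsub /fcst /fX /= mul0r => /eqP.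
by rewrite eq_sym subr_eq0 => /eqP.
Qed.

Local Notation omx := (one_minus_x R).
Local Notation M := (Motz R).

Lemma Motz_rel : fmul M omx = fadd (fmul (fmul fx fx) (fmul M M)) (fcst 1).
Proof.
set Q : fps := fsub (fmul omx omx) (fscale 4 (fmul fx fx)).
have Q0 : Q 0%N = 1.
  by rewrite /Q /fsub /fscale !fmul0E /one_minus_x /fsub /fcst /fX /= subr0 mul1r mul0r mulr0 subr0.
set S := fsqrt Q.
have SS : fmul S S = Q by apply: fsqrt_sq; rewrite Q0 ltr01.
have S0 : S 0%N = 1 by rewrite /S /fsqrt /= Q0 sqrtr1.
set D := fscale (1/2) (fsub omx S).
have D0 : D 0%N = 0.
  by rewrite /D /fscale /fsub /one_minus_x /fsub /fcst /fX /= S0 subr0 subrr mulr0.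
set E := divX D.
have XE : fmul fx E = D by rewrite /E Xmul_divX.
have HS : S = fsub omx (fmul (fcst 2) (fmul fx E)).
  rewrite XE /D half2; ring.
have H : fmul (fcst 4) (fmul fx (fadd (fsub (fmul fx (fmul E E)) (fmul E omx)) fx)) = fcst 0.
  transitivity (fsub (fmul S S) Q); last by rewrite SS; ring.
  rewrite HS /Q /one_minus_x fscaleE fcst2 fcst4; ring.
have K := cancel_X (cancel_unit (q := fcst 4) ltac:(by rewrite /fcst /= pnatr_eq0) H).
have E0 : E 0%N = 0.
  have := coef_at K; rewrite /fadd /fsub /fopp !fmul0E /one_minus_x /fsub /fcst /fX /=.
  by rewrite mul0r sub0r addr0 subr0 mulr1 => /eqP; rewrite oppr_eq0 => /eqP.
have XM : fmul fx M = E by rewrite Xmul_divX.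
rewrite -XM in K.
apply: esym; apply: sub_eq0; apply: cancel_X; rewrite -K /one_minus_x; ring.
Qed.

Local Notation io := (finv omx).

Lemma omx0 : omx 0%N = 1.
Proof. by rewrite /one_minus_x /fsub /fcst /fX /= subr0. Qed.

Lemma iota_rel : fmul io omx = fcst 1.
Proof. by rewrite fmulC fmul_finv // omx0 oner_neq0. Qed.

Lemma J_rel (y : fps) : y 0%N = 0 -> fmul (fcomp io y) (fsub (fcst 1) y) = fcst 1.
Proof.
move=> y0; have := congr1 (fun f => fcomp f y) iota_rel => /=.
by rewrite fcompM // /one_minus_x fcompB // fcompC // fcompX // fcompC.
Qed.

Lemma LF_f0 : LF_f R 0%N = 0.
Proof. by rewrite /LF_f /fdiv !fmul0E /fX /= !mul0r. Qed.

Lemma gcomp_plus (v y : fps) : y 0%N = 0 ->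
  fcomp (g_plus v) y = fmul (fmul (fsub (fcst 2) y) (fcomp io y)) (fcomp v (fmul (fmul y y) (fcomp io y))).
Proof.
move=> y0; rewrite /g_plus /riordan_apply fcompM // fcompA //; last exact: LF_f0.
by rewrite /LF_g /LF_f /fdiv !fcompM // fcompB // fcompC // fcompX.
Qed.

Lemma gcomp_minus (v y : fps) : y 0%N = 0 ->
  fcomp (g_minus v) y = fmul (fmul y (fcomp io y)) (fcomp v (fmul (fmul y y) (fcomp io y))).
Proof.
move=> y0; rewrite /g_minus /riordan_apply fcompM // fcompA //; last exact: LF_f0.
by rewrite /FF_g /FF_f /fdiv !fcompM // fcompX.
Qed.

Lemma fcomp_omx (y : fps) : y 0%N = 0 -> fcomp omx y = fsub (fcst 1) y.
Proof. by move=> y0; rewrite /one_minus_x fcompB // fcompC // fcompX. Qed.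

Local Notation t := (fdiv fx omx).
Local Notation Mt := (fcomp M t).

Lemma t0 : t 0%N = 0.
Proof. by rewrite /fdiv fmul0E /fX /= mul0r. Qed.

Lemma w_eq : fmul t Mt = fsub fC (fcst 1).
Proof.
have HM := congr1 (fun f => fcomp f t) Motz_rel => /=.
rewrite fcompM ?t0 // fcomp_omx ?t0 //
  fcompD ?t0 // !fcompM ?t0 // fcompX ?t0 // fcompC ?t0 // in HM.
set K := fsub (fmul Mt (fsub (fcst 1) t)) (fadd (fmul (fmul t t) (fmul Mt Mt)) (fcst 1)).
have HK : K = fcst 0 by rewrite /K HM; ring.
set L := fsub (fmul t omx) fx.
have HL : L = fcst 0.
  rewrite /L; transitivity (fsub (fmul fx (fmul io omx)) fx); first by rewrite /fdiv; ring.
  by rewrite iota_rel; ring.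
pose T (w : fps) := fsub (fsub (fmul w (fsub (fcst 1) (fmul (fcst 2) fx))) (fmul fx (fmul w w))) fx.
set w := fmul t Mt.
set c := fsub fC (fcst 1).
have Tw : T w = fcst 0.
  transitivity (fadd (fmul (fmul omx t) K) (fmul L (fadd (fcst 1) (fadd w (fmul w w))))).
    by rewrite /T /K /L /w /one_minus_x fcst2; ring.
  by rewrite HK HL; ring.
have Tc : T c = fcst 0.
  have E1 := Cat_rel.
  by rewrite /T /c fcst2; ring [E1].
apply: sub_eq0.
pose q := fsub (fsub (fcst 1) (fmul (fcst 2) fx)) (fmul fx (fadd w c)).
apply: (@cancel_unit q).
  by rewrite /q /fsub /fcst !fmul0E /fX /= mulr0 mul0r !subr0 oner_neq0.
transitivity (fsub (T w) (T c)); first by rewrite /q /T fcst2; ring.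
by rewrite Tw Tc; ring.
Qed.

Lemma divX_eq (B G Q : fps) : fmul B G = fmul fx Q -> divX (fmul B G) = Q.
Proof. by move=> ->; rewrite divX_Xmul. Qed.

Theorem main (v : fps) :
  let x := fX R in
  let C := Cat R in
  let xC := fmul x C in
  let one_minus_C := fsub (fcst 1) C in
  let w := fmul (fdiv x (one_minus_x R)) (fcomp (Motz R) (fdiv x (one_minus_x R))) in
  let two_minus_x := fsub (fcst 2) x in
  [/\ fcomp (g_plus v) xC
      = laurent_mul C (fcst (-2)) (fcomp (g_minus v) one_minus_C),
      fcomp (g_plus v) one_minus_C
      = laurent_mul (fsub (fadd (fscale 2 (fmul x (fmul C C))) xC) (fscale 4 C))
                    two_minus_x (fcomp (g_minus v) xC),
      fcomp (g_plus v) xC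
      = laurent_mul w (fsub x (fcst 2)) (fcomp (g_minus v) (fopp w))
    & fcomp (g_plus v) (fopp w)
      = laurent_mul
          (fadd (fmul (fsub (fscale 3 x) (fcst 4)) C)
                (fscale 2 (fdiv (fmul (fmul x x) (fmul C (fcomp (Motz R) (fdiv x (one_minus_x R)))))
                                (one_minus_x R))))
          two_minus_x (fcomp (g_minus v) xC)].
Proof.
cbv zeta.
have E1 := Cat_rel.
have y10 : (fmul fx fC) 0%N = 0 by rewrite fmul0E /fX /= mul0r.
have y20 : (fsub (fcst 1) fC) 0%N = 0 by rewrite /fsub /fcst /= Cat0 subrr.
have J1 : fcomp io (fmul fx fC) = fC.
  by apply: (inv_uniq (J_rel y10)); ring [E1].
have J2 : fcomp io (fsub (fcst 1) fC) = fsub (fcst 1) (fmul fx fC).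
  by apply: (inv_uniq (J_rel y20)); ring [E1].
have U : fmul (fmul (fsub (fcst 1) fC) (fsub (fcst 1) fC)) (fsub (fcst 1) (fmul fx fC))
       = fmul (fmul (fmul fx fC) (fmul fx fC)) fC by ring [E1].
have D : fdiv (fmul (fmul fx fx) (fmul fC (fcomp M t))) omx = fmul (fmul fx fC) (fmul t (fcomp M t)).
  by rewrite /fdiv; ring.
rewrite D w_eq.
have -> : fopp (fsub fC (fcst 1)) = fsub (fcst 1) fC by ring.
rewrite !gcomp_plus // !gcomp_minus // J1 J2 U.
set P := fcomp v _.
rewrite /laurent_mul !fscaleE.
split.
- rewrite (@divX_eq _ _ (fmul (fcst 2) (fmul fC P))); last by rewrite fcstN fcst2; ring [E1].
  rewrite fcst2; ring [E1].
- rewrite (@divX_eq _ _ (fmul (fsub (fcst 2) fx) (fmul fC (fmul fC P)))); last by ring.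
  rewrite fcst2 fcst4; ring [E1].
- rewrite (@divX_eq _ _ (fmul (fsub (fcst 2) fx) (fmul fC P))); last by rewrite fcst2; ring [E1].
  rewrite fcst2; ring [E1].
- rewrite (@divX_eq _ _ (fmul (fsub (fcst 2) fx) (fmul fC (fmul fC P)))); last by ring.
  rewrite fcst2 fcst3 fcst4; ring [E1].
Qed.

End Infra.

Theorem corollary4p4 (R : realType) (v : fps R) :
  let x := fX R in
  let C := Cat R in
  let xC := fmul x C in
  let one_minus_C := fsub (fcst 1) C in
  (* x/(1-x) * M(x/(1-x)) *)
  let w := fmul (fdiv x (one_minus_x R)) (fcomp (Motz R) (fdiv x (one_minus_x R))) in
  let two_minus_x := fsub (fcst 2) x in
  [/\ (* (a) *)
      fcomp (g_plus v) xC
      = laurent_mul C (fcst (-2)) (fcomp (g_minus v) one_minus_C),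
      (* (b) *)
      fcomp (g_plus v) one_minus_C
      = laurent_mul (fsub (fadd (fscale 2 (fmul x (fmul C C))) xC) (fscale 4 C))
                    two_minus_x (fcomp (g_minus v) xC),
      (* (c) *)
      fcomp (g_plus v) xC
      = laurent_mul w (fsub x (fcst 2)) (fcomp (g_minus v) (fopp w))
    & (* (d) *)
      fcomp (g_plus v) (fopp w)
      = laurent_mul
          (fadd (fmul (fsub (fscale 3 x) (fcst 4)) C)
                (fscale 2 (fdiv (fmul (fmul x x) (fmul C (fcomp (Motz R) (fdiv x (one_minus_x R)))))
                                (one_minus_x R))))
          two_minus_x (fcomp (g_minus v) xC)].
Proof. exact: (@main R v). Qed.
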